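(* Let $V$ be a vector space of dimension $n$ over a field $\mathcal{F}$, let $\Lambda=(\lambda_{i,j})_{i,j=1,\dots,n}$ be an $n\times n$ matrix all of whose entries are non-zero elements of $\mathcal{F}$, and let $\mathcal{V}=(v_1,\dots,v_n)$ be a basis of $V$. Let $\phi:V\to V$ be a map (not assumed linear) such that for every $v,w\in V$ there is an endomorphism $\phi_{v,w}$ of $V$ which is $\Lambda$-symmetric with respect to $\mathcal{V}$ and satisfies $\phi(v)=\phi_{v,w}(v)$ and $\phi(w)=\phi_{v,w}(w)$. Then $\phi$ is linear.
   Context: For a linear map $\psi:V\to V$, its matrix with respect to $\mathcal{V}$ is $(x_{i,j})_{i,j=1}^n$ where $\psi(v_j)=\sum_{i=1}^n x_{i,j}v_i$. An endomorphism $\psi$ is called $\Lambda$-symmetric with respect to $\mathcal{V}$ if its matrix with respect to $\mathcal{V}$ has the form $(\lambda_{i,j}a_{i,j})_{i,j=1}^n$ for some symmetric matrix $A=(a_{i,j})$ (i.e. $a_{i,j}=a_{j,i}$ for all $i,j$). *)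

(* Defs.v *)
From mathcomp Require Import all_boot all_order all_algebra.
Set Implicit Arguments. Unset Strict Implicit. Unset Printing Implicit Defensive.
Import GRing.Theory.
Local Open Scope ring_scope.

Definition mat_of_end (F : fieldType) (V : vectType F) (n : nat)
  (B : n.-tuple V) (psi : 'End(V)) : 'M[F]_n :=
  \matrix_(i < n, j < n) coord B i (psi (B`_j)).

Definition Lambda_symmetric (F : fieldType) (V : vectType F) (n : nat)
  (Lam : 'M[F]_n) (B : n.-tuple V) (psi : 'End(V)) : Prop :=
  exists A : 'M[F]_n, A^T = A /\
    mat_of_end B psi = \matrix_(i < n, j < n) (Lam i j * A i j).

(* Main.v *)
Require Import Defs.
From mathcomp Require Import all_boot all_order all_algebra.
Import GRing.Theory.
Local Open Scope ring_scope.

Theorem theorem2p3 (F : fieldType) (V : vectType F) (n : nat)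
  (hdim : \dim (fullv : {vspace V}) = n)
  (Lam : 'M[F]_n) (hLam : forall i j, Lam i j != 0)
  (B : n.-tuple V) (hB : basis_of fullv B)
  (phi : V -> V)
  (hphi : forall v w : V, exists psi : 'End(V),
      Lambda_symmetric Lam B psi /\ phi v = psi v /\ phi w = psi w) :
  linear phi.
Proof.
have key : forall v (k : 'I_n), coord B k (phi v) =
    \sum_j (Lam k j * coord B j (phi B`_k) / Lam j k) * coord B j v.
  move=> v k.
  have [psi [[A [AT hM]] [e1 e2]]] := hphi v B`_k.
  have hv : v = \sum_j coord B j v *: B`_j by apply: coord_basis hB (memvf v).
  rewrite e1 e2 {1}hv linear_sum /= linear_sum /=.
  apply: eq_bigr => j _.
  have m1 : coord B k (psi B`_j) = Lam k j * A k j.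
    by have := congr1 (fun M : 'M[F]_n => M k j) hM; rewrite !mxE.
  have m2 : coord B j (psi B`_k) = Lam j k * A j k.
    by have := congr1 (fun M : 'M[F]_n => M j k) hM; rewrite !mxE.
  have aT : A j k = A k j.
    by have := congr1 (fun M : 'M[F]_n => M k j) AT; rewrite !mxE.
  rewrite !linearZ /= m1 m2 aT [Lam j k * _]mulrC [Lam k j * (_ * _)]mulrA mulfK //.
  by rewrite mulrC.
move=> a u w.
rewrite (coord_basis hB (memvf (phi (a *: u + w)))).
rewrite [RHS](coord_basis hB (memvf (a *: phi u + phi w))).
apply: eq_bigr => k _; congr (_ *: _).
rewrite key linearD linearZ /= !key mulr_sumr -big_split /=.
apply: eq_bigr => j _.
by rewrite linearD linearZ /= mulrDr mulrCA.
Qed.
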